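(* Let $V$ be a finite-dimensional vector space over $\mathbb{F}_q$, let $\mathcal{F}=\{\langle f_1\rangle,\dots,\langle f_\nu\rangle\}$ be a projective point family in $V$, and let $\varphi:\mathbb{F}_q^\nu\to V$ be a parent function of $\mathcal{F}$. Endow $\mathbb{F}_q^\nu$ with the Hamming weight. Then $\operatorname{wt}_{\mathcal{F}}=\operatorname{wt}_{\mathrm{quot},\varphi}$, and the parent code $\ker(\varphi)$ has minimum Hamming distance $d_H(\ker\varphi)=\min_{x,y\in\ker\varphi,\,x\neq y}d_H(x,y)\ge 3$.
   Context: A projective point family is a set of pairwise linearly independent nonzero vectors (equivalently, distinct $1$-dimensional subspaces) $\mathcal{F}$ in $V$, with projective weight $\operatorname{wt}_{\mathcal{F}}(x)=\min(\{|I|:I\subseteq\mathcal{F},\ x\in\langle I\rangle\}\cup\{\infty\})$. A parent function of $\mathcal{F}$ is a linear map $\varphi:\mathbb{F}_q^\nu\to V$ such that $\{\langle\varphi(e_i)\rangle: i=1,\dots,\nu\}=\mathcal{F}$, where $e_i$ are the standard basis vectors; $\ker\varphi$ is a parent code. For a linear map $\psi:(X,\operatorname{wt}_X)\to Y$, $\operatorname{wt}_{\mathrm{quot},\psi}(y)=\min\{\operatorname{wt}_X(w):w\in\psi^{-1}(y)\}$, and $\infty$ if $\psi^{-1}(y)=\emptyset$. *)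

(* Defs.v *)
From HB Require Import structures.
From mathcomp Require Import all_boot all_order all_algebra.
Set Implicit Arguments. Unset Strict Implicit. Unset Printing Implicit Defensive.
Import GRing.Theory.
Local Open Scope ring_scope.

(* Minimum of c over {S | P S} in a finite type, None standing for +infinity
   (minimum of the empty set). *)
Definition min_opt (T : finType) (P : pred T) (c : T -> nat) : option nat :=
  if [pick A | P A && [forall B, P B ==> (c A <= c B)%N]] is Some A
  then Some (c A) else None.

Section Defs.
Variables (F : finFieldType) (V : vectType F).

Definition proj_point_family (fam : seq {vspace V}) : bool :=
  uniq fam && all (fun U => \dim U == 1%N) fam.

Definition span_sub (fam : seq {vspace V}) (S : {set 'I_(size fam)}) : {vspace V} :=
  (\sum_(i in S) nth 0%VS fam i)%VS.

Definition wtF (fam : seq {vspace V}) (x : V) : option nat :=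
  min_opt (fun S : {set 'I_(size fam)} => x \in span_sub S) (fun S => #|S|).

Definition hamming_wt (nu : nat) (w : 'rV[F]_nu) : nat := #|[set i | w 0 i != 0]|.
Definition hamming_dist (nu : nat) (x y : 'rV[F]_nu) : nat :=
  #|[set i | x 0 i != y 0 i]|.

Definition wt_quot (nu : nat) (psi : 'rV[F]_nu -> V) (y : V) : option nat :=
  min_opt (fun w => psi w == y) (@hamming_wt nu).

Definition parent_function (nu : nat) (fam : seq {vspace V})
  (phi : 'rV[F]_nu -> V) : Prop :=
  forall U : {vspace V}, (U \in fam) <-> exists i : 'I_nu, U = <[phi (delta_mx ord0 i)]>%VS.

End Defs.

(* Main.v *)
Require Import Defs.
From HB Require Import structures.
From mathcomp Require Import all_boot all_order all_algebra.
Set Implicit Arguments. Unset Strict Implicit. Unset Printing Implicit Defensive.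
Import GRing.Theory.
Local Open Scope ring_scope.

Lemma min_optP (T : finType) (P : pred T) (c : T -> nat) :
  (min_opt P c = None -> forall A, ~~ P A) /\
  (forall m, min_opt P c = Some m -> exists A, [/\ P A, c A = m & forall B, P B -> (m <= c B)%N]).
Proof.
rewrite /min_opt; case: pickP => [A /andP[PA /forallP mA]|H].
  split=> // m [<-]; exists A; split=> // B PB; exact: (implyP (mA B)).
split=> // _ A; apply/negP=> PA.
case: (arg_minnP c PA) => B PB mB.
have := H B; rewrite PB /=; move/negbT/forallPn => [C]; rewrite negb_imply => /andP[PC].
by rewrite (mB C PC).
Qed.

Lemma min_opt_eq (T1 T2 : finType) (P1 : pred T1) c1 (P2 : pred T2) c2 :
  (forall A, P1 A -> exists2 B, P2 B & (c2 B <= c1 A)%N) ->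
  (forall B, P2 B -> exists2 A, P1 A & (c1 A <= c2 B)%N) ->
  min_opt P1 c1 = min_opt P2 c2.
Proof.
move=> h12 h21.
have [N1 S1] := min_optP P1 c1; have [N2 S2] := min_optP P2 c2.
case E1: (min_opt P1 c1) => [m1|]; case E2: (min_opt P2 c2) => [m2|] //.
- have [A [PA <- mA]] := S1 _ E1; have [B [PB <- mB]] := S2 _ E2.
  have [B' PB' l1] := h12 _ PA; have [A' PA' l2] := h21 _ PB.
  congr Some; apply/eqP; rewrite eqn_leq.
  by rewrite (leq_trans (mA _ PA') l2) (leq_trans (mB _ PB') l1).
- have [A [PA _ _]] := S1 _ E1; have [B PB _] := h12 _ PA.
  by have := N2 E2 B; rewrite PB.
- have [B [PB _ _]] := S2 _ E2; have [A PA _] := h21 _ PB.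
  by have := N1 E1 A; rewrite PA.
Qed.

Theorem proposition4p1 (F : finFieldType) (V : vectType F) (nu : nat)
  (fam : seq {vspace V}) (phi : {linear 'rV[F]_nu -> V}) :
  proj_point_family fam -> size fam = nu -> parent_function fam phi ->
  (forall x : V, wtF fam x = wt_quot phi x) /\
  (forall x y : 'rV[F]_nu, phi x = 0 -> phi y = 0 -> x != y ->
     (3 <= hamming_dist x y)%N).
Proof.
move=> /andP[Funiq Fdim] Hsz Hpar; subst nu.
set n := size fam in phi Hpar *.
pose e (i : 'I_n) : 'rV[F]_n := delta_mx 0 i.
have Hline i : <[phi (e i)]>%VS \in fam by apply/Hpar; exists i.
have Hnz i : phi (e i) != 0.
  by have := allP Fdim _ (Hline i); rewrite dim_vline; case: (phi (e i) != 0).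
pose rho (j : 'I_n) : 'I_n := odflt j [pick i | nth 0%VS fam j == <[phi (e i)]>%VS].
have Hrho (j : 'I_n) : nth 0%VS fam j = <[phi (e (rho j))]>%VS.
  rewrite /rho; case: pickP => [i /eqP //|H].
  have [i Hi] := (Hpar (nth 0%VS fam j)).1 (mem_nth _ (ltn_ord j)).
  by have := H i; rewrite Hi eqxx.
have rho_inj : injective rho.
  move=> j1 j2 E; apply/val_inj/eqP.
  by rewrite -(nth_uniq 0%VS (ltn_ord j1) (ltn_ord j2) Funiq) !Hrho E.
have [rhoi rhoK rhoiK] := injF_bij rho_inj.
split.
  move=> x; apply: min_opt_eq.
  - move=> S /= /memv_sumP [vs Hvs ->].
    pose k (j : 'I_n) : F := odflt 0 [pick c | vs j == c *: phi (e (rho j))].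
    have Hk (j : 'I_n) : j \in S -> vs j = k j *: phi (e (rho j)).
      move=> jS; have := Hvs j jS; rewrite Hrho => /vlineP [c Hc].
      rewrite /k; case: pickP => [c' /eqP //|H].
      by have := H c; rewrite Hc eqxx.
    exists (\sum_(j in S) k j *: e (rho j)).
      rewrite linear_sum; apply/eqP/eq_bigr => j jS.
      by rewrite linearZ Hk.
    rewrite /hamming_wt -[#|S|](card_imset _ rho_inj); apply: subset_leq_card.
    apply/subsetP => i.
    rewrite inE; apply: contraR => iS.
    rewrite summxE big1 // => j jS.
    rewrite !mxE /=; case: eqP => [E|]; last by rewrite mulr0.
    by case/imsetP: iS; exists j.
  - move=> w /= /eqP <-.
    exists [set j | w 0 (rho j) != 0].
      rewrite /span_sub {1}(row_sum_delta w) linear_sum.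
      rewrite (reindex_inj rho_inj) /=.
      apply: memv_suml => j _; rewrite linearZ /=.
      have [jS|] := boolP (j \in [set j | w 0 (rho j) != 0]).
        apply: (subvP (sumv_sup j jS (subvv _))).
        by rewrite Hrho memvZ // memv_line.
      by rewrite inE negbK => /eqP ->; rewrite scale0r mem0v.
    rewrite /hamming_wt -[X in (X <= _)%N](card_imset _ rho_inj); apply: subset_leq_card.
    apply/subsetP => i; case/imsetP => j; rewrite !inE => ? ->; done.
move=> x y px py nxy.
have pz : phi (x - y) = 0 by rewrite linearB /= px py subrr.
have z0 : x - y != 0 by rewrite subr_eq0.
have -> : hamming_dist x y = hamming_wt (x - y).
  rewrite /hamming_dist /hamming_wt; apply: eq_card => i.
  by rewrite !inE !mxE subr_eq0.
move: (x - y) pz z0 => z pz z0.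
rewrite /hamming_wt; set s := [set i | z 0 i != 0].
have zs : z = \sum_(i in s) z 0 i *: e i.
  rewrite {1}(row_sum_delta z) [RHS]big_mkcond /=; apply: eq_bigr => i _.
  by rewrite inE; case: (z 0 i =P 0) => [->|_] /=; rewrite ?scale0r.
have phis := congr1 phi zs; rewrite pz linear_sum in phis.
have zin i : i \in s -> z 0 i != 0 by rewrite inE.
rewrite leqNgt; apply/negP => hs.
move: hs; case E: #|s| => [|[|[|k]]] // _.
- move/eqP: E; rewrite cards_eq0 => /eqP sE.
  by rewrite zs sE big_set0 eqxx in z0.
- move/eqP/cards1P: E => [i sE].
  have zi := zin i; rewrite sE set11 in zi; have {}zi := zi isT.
  rewrite sE big_set1 linearZ /= in phis.
  by move/esym/eqP: phis; rewrite scaler_eq0 (negbTE zi) (negbTE (Hnz i)).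
- move/eqP/cards2P: E => [i [j [ij sE]]].
  have zi := zin i; have zj := zin j; rewrite sE !inE eqxx ?orbT in zi zj.
  have {}zi := zi isT; have {}zj := zj (introT orP (or_intror (eqxx j))).
  rewrite sE big_setU1 ?inE // big_set1 /= !linearZ /= in phis.
  have hp : phi (e i) \in <[phi (e j)]>%VS.
    have h1 : z 0 i *: phi (e i) = - (z 0 j *: phi (e j)).
      by apply/eqP; rewrite -subr_eq0 opprK -phis.
    have h2 : z 0 i *: phi (e i) \in <[phi (e j)]>%VS.
      by rewrite h1 memvN memvZ // memv_line.
    have := memvZ (z 0 i)^-1 h2; rewrite scalerA mulVf // scale1r //.
  have Eij : <[phi (e i)]>%VS = <[phi (e j)]>%VS.
    apply/eqP; rewrite eqEdim -memvE hp !dim_vline Hnz Hnz //.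
  have := nth_uniq 0%VS (ltn_ord (rhoi i)) (ltn_ord (rhoi j)) Funiq.
  rewrite !Hrho !rhoiK Eij eqxx => /esym/eqP E.
  by move: ij; rewrite -(rhoiK i) -(rhoiK j) (val_inj E) eqxx.
Qed.
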